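(* Let $d=\mu_+-\mu_->0$. For every $\epsilon\in\left[0,\frac{d}{2}\right]$ and every $K\in\left(1,B_K(\epsilon)\right]$, where $$B_K(\epsilon)=\min\left\{\exp\!\left(\frac{(d-2\epsilon)^2}{2}\right),\ \frac{d}{\epsilon}-1\right\}$$ (with $d/\epsilon:=+\infty$ when $\epsilon=0$), the optimal fair, natural and robust thresholds satisfy $$\mu_-+\epsilon\;\le\;\theta_{\mathrm f}\;\le\;\theta^*\;\le\;\theta^{(\epsilon)}_{\mathrm r}\;\le\;\mu_+-\epsilon .$$ Moreover, for fixed $\mu_\pm$ and $K$, the map $\epsilon\mapsto\theta^{(\epsilon)}_{\mathrm r}$ is increasing on the set of $\epsilon\in\left[0,\frac d2\right]$ for which $K\le B_K(\epsilon)$.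
   Context: Setting (one-dimensional Gaussian mixture). Fix real numbers $\mu_-<\mu_+$ and $K>1$, and let $d=\mu_+-\mu_-$. Let $(X,Y)$ be a random pair with $\Pr(Y=1)=\Pr(Y=-1)=\tfrac12$, $X\mid Y=-1\sim\mathcal N(\mu_-,1)$, and $X\mid Y=1\sim\mathcal N(\mu_+,K^2)$ ($K^2$ is the variance). For $\theta\in\mathbb R$, the threshold classifier $f_\theta$ is given by $f_\theta(x)=1$ if $x>\theta$ and $f_\theta(x)=-1$ otherwise. The class-conditional error rates are $e_+(\theta)=\Pr(f_\theta(X)\ne 1\mid Y=1)=\Pr(X\le\theta\mid Y=1)$ and $e_-(\theta)=\Pr(f_\theta(X)\ne -1\mid Y=-1)=\Pr(X>\theta\mid Y=-1)$. The natural error is $R_{\mathrm{nat}}(\theta)=\Pr(f_\theta(X)\ne Y)=\tfrac12 e_+(\theta)+\tfrac12 e_-(\theta)$. For $\epsilon\ge 0$, the robust error is $R_{\mathrm{rob}}^{\epsilon}(\theta)=\Pr(\exists\tau,\ |\tau|\le\epsilon,\ f_\theta(X+\tau)\ne Y)=\tfrac12\Pr(X\le\theta+\epsilon\mid Y=1)+\tfrac12\Pr(X>\theta-\epsilon\mid Y=-1)$. Optimal models (all thresholds restricted to $[\mu_-,\mu_+]$): $\theta^*$ is the minimizer of $R_{\mathrm{nat}}$ over $[\mu_-,\mu_+]$ (the Bayes/natural classifier); $\theta_{\mathrm f}$ is the threshold in $[\mu_-,\mu_+]$ at which the class-conditional errors are equal, $e_+(\theta_{\mathrm f})=e_-(\theta_{\mathrm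 f})$ (the optimal accuracy-parity fair classifier, i.e. the lexicographic minimizer of first $|e_+(\theta)-e_-(\theta)|$ and then $R_{\mathrm{nat}}(\theta)$); $\theta^{(\epsilon)}_{\mathrm r}$ is the minimizer of $R^{\epsilon}_{\mathrm{rob}}$ over $[\mu_-,\mu_+]$ (the optimal robust classifier). *)

(* Defs.v *)
From Stdlib Require Import Reals.
From Coquelicot Require Import Coquelicot.
Open Scope R_scope.

Definition gauss_pdf (t : R) : R := exp (- t ^ 2 / 2) / sqrt (2 * PI).
Definition Phi (x : R) : R := 1 / 2 + RInt gauss_pdf 0 x.

(* X | Y=1 ~ N(mu_p, K^2), X | Y=-1 ~ N(mu_m, 1). *)
(* e_+(theta) = P(X <= theta | Y = 1) *)
Definition e_plus (mu_p K theta : R) : R := Phi ((theta - mu_p) / K).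
(* e_-(theta) = P(X > theta | Y = -1) *)
Definition e_minus (mu_m theta : R) : R := 1 - Phi (theta - mu_m).

Definition R_nat (mu_m mu_p K theta : R) : R :=
  / 2 * e_plus mu_p K theta + / 2 * e_minus mu_m theta.

(* robust error: 1/2 P(X <= theta+eps | Y=1) + 1/2 P(X > theta-eps | Y=-1) *)
Definition R_rob (mu_m mu_p K eps theta : R) : R :=
  / 2 * Phi ((theta + eps - mu_p) / K) + / 2 * (1 - Phi (theta - eps - mu_m)).

Definition is_min_on (f : R -> R) (a b x : R) : Prop :=
  a <= x <= b /\ forall y, a <= y <= b -> f x <= f y.

(* K <= B_K(eps) = min { exp((d-2eps)^2/2), d/eps - 1 }, with d/0 = +oo *)
Definition le_BK (d eps K : R) : Prop :=
  K <= exp ((d - 2 * eps) ^ 2 / 2) /\ (0 < eps -> K <= d / eps - 1).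

(* Main.v *)
Require Import Defs.
From Stdlib Require Import Reals Lra Psatz ssreflect.
From Coquelicot Require Import Coquelicot.
Open Scope R_scope.

Lemma sqrt2pi_pos : 0 < sqrt (2 * PI).
Proof. apply sqrt_lt_R0. pose proof PI_RGT_0; lra. Qed.

Lemma gauss_pos t : 0 < gauss_pdf t.
Proof. unfold gauss_pdf. apply Rdiv_lt_0_compat. apply exp_pos. apply sqrt2pi_pos. Qed.

Lemma gauss_even t : gauss_pdf (- t) = gauss_pdf t.
Proof. unfold gauss_pdf. f_equal. f_equal. f_equal. ring. Qed.

Lemma gauss_cont t : continuous gauss_pdf t.
Proof.
  apply: (ex_derive_continuous (K:=R_AbsRing) (V:=R_NormedModule)). unfold gauss_pdf. auto_derive.
  pose proof sqrt2pi_pos; lra.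
Qed.

Lemma Phi_deriv x : is_derive Phi x (gauss_pdf x).
Proof.
  unfold Phi.
  replace (gauss_pdf x) with (0 + gauss_pdf x) by ring.
  apply: is_derive_plus. apply: is_derive_const.
  apply: is_derive_RInt; last by apply gauss_cont.
  apply: filter_forall => b. apply: RInt_correct.
  apply: ex_RInt_continuous => z _. apply gauss_cont.
Qed.

Lemma Phi_incr x y : x < y -> Phi x < Phi y.
Proof.
  move=> Hxy.
  destruct (MVT_cor2 Phi gauss_pdf x y Hxy) as [c [Hc _]].
  { move=> c _. apply is_derive_Reals. apply Phi_deriv. }
  pose proof (gauss_pos c). nra.
Qed.

Lemma Phi_inj x y : Phi x = Phi y -> x = y.
Proof.
  move=> H. destruct (Rtotal_order x y) as [h|[h|h]] => //.
  - apply Phi_incr in h; lra.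
  - apply Phi_incr in h; lra.
Qed.

Lemma Phi_sym y : Phi (- y) = 1 - Phi y.
Proof.
  set S := fun z => Phi z + Phi (- z).
  assert (HS : forall c, derivable_pt_lim S c 0).
  { move=> c. apply is_derive_Reals.
    replace 0 with (gauss_pdf c + (-1) * gauss_pdf (- c)) by (rewrite gauss_even; ring).
    apply: is_derive_plus. apply Phi_deriv.
    apply: (is_derive_comp Phi (fun z => - z)). apply Phi_deriv.
    apply: is_derive_opp. apply: is_derive_id. }
  assert (S0 : S 0 = 1).
  { rewrite /S Ropp_0 /Phi RInt_point. rewrite /zero /=. lra. }
  assert (S y = 1).
  { destruct (Rtotal_order 0 y) as [h|[h|h]].
    - destruct (MVT_cor2 S (fun _ => 0) 0 y h) as [c [Hc _]]. move=> c _; apply HS. lra.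
    - subst; auto.
    - destruct (MVT_cor2 S (fun _ => 0) y 0 h) as [c [Hc _]]. move=> c _; apply HS. lra. }
  rewrite /S in H. lra.
Qed.

Definition Drob (mu_m mu_p K eps th : R) :=
  / 2 * (gauss_pdf ((th + eps - mu_p) / K) / K - gauss_pdf (th - eps - mu_m)).

Definition Pq (mu_m mu_p K eps th : R) :=
  K ^ 2 * (th - mu_m - eps) ^ 2 - (th + eps - mu_p) ^ 2 - 2 * K ^ 2 * ln K.

Lemma rob_deriv mu_m mu_p K eps th : K <> 0 ->
  is_derive (R_rob mu_m mu_p K eps) th (Drob mu_m mu_p K eps th).
Proof.
  move=> HK. rewrite /R_rob /Drob.
  replace (/ 2 * (gauss_pdf ((th + eps - mu_p) / K) / K - gauss_pdf (th - eps - mu_m)))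
    with (/2 * (/K * gauss_pdf ((th + eps - mu_p) / K)) + /2 * (0 - 1 * gauss_pdf (th - eps - mu_m)))
    by (field; auto).
  apply: is_derive_plus.
  - apply: is_derive_scal.
    apply: (is_derive_comp Phi (fun z => (z + eps - mu_p) / K)). apply Phi_deriv.
    replace (/ K) with ((1 + 0 - 0) * / K) by ring.
    apply: is_derive_scal_l. apply: is_derive_minus. apply: is_derive_plus.
    apply: is_derive_id. apply: is_derive_const. apply: is_derive_const.
  - apply: is_derive_scal. apply: is_derive_minus. apply: is_derive_const.
    apply: (is_derive_comp Phi (fun z => z - eps - mu_m)). apply Phi_deriv.
    replace 1 with (1 - 0 - 0) by ring.
    apply: is_derive_minus. apply: is_derive_minus. apply: is_derive_id.
    apply: is_derive_const. apply: is_derive_const.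
Qed.

Lemma Drob_sign mu_m mu_p K eps th : 1 < K ->
  (0 < Pq mu_m mu_p K eps th -> 0 < Drob mu_m mu_p K eps th) /\
  (Pq mu_m mu_p K eps th < 0 -> Drob mu_m mu_p K eps th < 0).
Proof.
  move=> HK.
  set a := (th + eps - mu_p) / K. set b := th - eps - mu_m.
  have Ha : th + eps - mu_p = K * a by rewrite /a; field; lra.
  have HP : Pq mu_m mu_p K eps th = 2 * K^2 * ((- a^2/2 - ln K) - (- b^2/2)).
  { rewrite /Pq Ha /b. clearbody a. field. }
  have He : gauss_pdf a / K = exp (- a^2/2 - ln K) / sqrt (2 * PI).
  { rewrite /gauss_pdf /Rminus exp_plus exp_Ropp exp_ln; [|lra]. field.
    split; [lra|]. pose proof sqrt2pi_pos; lra. }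
  have HD : Drob mu_m mu_p K eps th =
     / 2 * ((exp (- a^2/2 - ln K) - exp (- b ^ 2 / 2)) / sqrt (2 * PI)).
  { rewrite /Drob -/a -/b He /gauss_pdf. field. pose proof sqrt2pi_pos; lra. }
  pose proof sqrt2pi_pos.
  have HK2 : 0 < 2 * K^2 by nra.
  split => Hp; rewrite HD.
  - have : - b^2/2 < - a^2/2 - ln K.
    { rewrite HP in Hp. apply Rmult_lt_reg_l with (2 * K^2); lra. }
    move/exp_increasing => h.
    apply Rmult_lt_0_compat; [lra|]. apply Rdiv_lt_0_compat; lra.
  - have : - a^2/2 - ln K < - b^2/2.
    { rewrite HP in Hp. apply Rmult_lt_reg_l with (2 * K^2); lra. }
    move/exp_increasing => h.
    have : (exp (- a ^ 2 / 2 - ln K) - exp (- b ^ 2 / 2)) / sqrt (2 * PI) < 0.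
    { rewrite /Rdiv. apply Rmult_neg_pos => //. lra. apply Rinv_0_lt_compat; lra. }
    lra.
Qed.

Lemma Pq_factor mu_m mu_p K eps th r :
  Pq mu_m mu_p K eps th - Pq mu_m mu_p K eps r =
  (th - r) * (K^2 * (th + r - 2*mu_m - 2*eps) - (th + r + 2*eps - 2*mu_p)).
Proof. rewrite /Pq. ring. Qed.

Lemma Pq_sign mu_m mu_p K eps r : 1 < K ->
  Pq mu_m mu_p K eps mu_m < 0 -> Pq mu_m mu_p K eps r = 0 -> mu_m < r ->
  forall th, mu_m <= th ->
  (th < r -> Pq mu_m mu_p K eps th < 0) /\ (r < th -> 0 < Pq mu_m mu_p K eps th).
Proof.
  move=> HK H0 Hr Hlt th Hth.
  have F0 := Pq_factor mu_m mu_p K eps mu_m r.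
  have F1 := Pq_factor mu_m mu_p K eps th r.
  set L0 := (K^2 * (mu_m + r - 2*mu_m - 2*eps) - (mu_m + r + 2*eps - 2*mu_p)) in F0.
  set L1 := (K^2 * (th + r - 2*mu_m - 2*eps) - (th + r + 2*eps - 2*mu_p)) in F1.
  have HL1 : L1 - L0 = (K^2 - 1) * (th - mu_m) by rewrite /L1 /L0; ring.
  clearbody L0 L1.
  have HL0 : 0 < L0.
  { rewrite Hr in F0. destruct (Rlt_or_le 0 L0) as [h|h] => //.
    have : 0 <= (r - mu_m) * (- L0) by apply Rmult_le_pos; lra.
    move=> h1. have : (mu_m - r) * L0 = (r - mu_m) * (- L0) by ring. lra. }
  have : 0 <= (K^2-1)*(th-mu_m) by apply Rmult_le_pos; nra.
  move=> h0.
  have HL : 0 < L1 by lra.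
  split => h.
  - have : (th - r) * L1 < 0 by apply Rmult_neg_pos; lra. lra.
  - have : 0 < (th - r) * L1 by apply Rmult_lt_0_compat; lra. lra.
Qed.

Lemma lnK_pos K : 1 < K -> 0 < ln K.
Proof. move=> h. rewrite -ln_1. apply ln_increasing; lra. Qed.

Lemma Pq_cont mu_m mu_p K eps : continuity (Pq mu_m mu_p K eps).
Proof.
  move=> x. apply continuity_pt_filterlim.
  apply: (ex_derive_continuous (K:=R_AbsRing) (V:=R_NormedModule)).
  unfold Pq. auto_derive. trivial.
Qed.

Lemma rob_char mu_m mu_p K eps : mu_m < mu_p -> 1 < K ->
  0 <= eps <= (mu_p - mu_m) / 2 -> le_BK (mu_p - mu_m) eps K ->
  exists r, mu_m + eps < r <= mu_p - eps /\ Pq mu_m mu_p K eps r = 0 /\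
   Pq mu_m mu_p K eps mu_m < 0 /\
   forall th, is_min_on (R_rob mu_m mu_p K eps) mu_m mu_p th -> th = r.
Proof.
  move=> Hm HK He [HB1 HB2].
  have lnp := lnK_pos K HK.
  set d := mu_p - mu_m in He HB1 HB2.
  have HKe : K * eps <= d - eps.
  { destruct (Rle_lt_or_eq_dec 0 eps (proj1 He)) as [h|h].
    - have := HB2 h. move=> h2.
      have : K * eps <= (d / eps - 1) * eps by apply Rmult_le_compat_r; lra.
      have -> : (d / eps - 1) * eps = d - eps by field; lra.
      done.
    - rewrite -h. rewrite /d. lra. }
  have Hleft : Pq mu_m mu_p K eps mu_m < 0.
  { rewrite /Pq.
    have : (K * eps)^2 <= (d - eps)^2.
    { apply pow_incr. split; [nra|lra]. }
    have : 0 < K^2 * ln K by apply Rmult_lt_0_compat; nra.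
    unfold d. move=> h1 h2. nra. }
  have Hright : 0 <= Pq mu_m mu_p K eps (mu_p - eps).
  { rewrite /Pq.
    have : ln K <= (d - 2*eps)^2/2.
    { rewrite -(ln_exp ((d - 2 * eps) ^ 2 / 2)). apply ln_le; lra. }
    move=> h.
    have -> : mu_p - eps - mu_m - eps = d - 2*eps by rewrite /d; ring.
    have -> : mu_p - eps + eps - mu_p = 0 by ring.
    have -> : K ^ 2 * (d - 2 * eps) ^ 2 - 0 ^ 2 - 2 * K ^ 2 * ln K =
       K^2 * ((d - 2*eps)^2 - 2 * ln K) by ring.
    apply Rmult_le_pos; [apply pow2_ge_0|lra]. }
  have Hmid : Pq mu_m mu_p K eps (mu_m + eps) < 0.
  { rewrite /Pq. have -> : mu_m + eps - mu_m - eps = 0 by ring.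
    have : 0 < K^2 * ln K by apply Rmult_lt_0_compat; nra.
    move=> h. have : 0 <= (mu_m + eps + eps - mu_p) ^ 2 by apply pow2_ge_0. lra. }
  have Hlt : mu_m < mu_p - eps by rewrite /d in He; lra.
  have [r [Hr1 Hr2]] : exists r, mu_m <= r <= mu_p - eps /\ Pq mu_m mu_p K eps r = 0.
  { destruct (Rle_lt_or_eq_dec 0 _ Hright) as [h|h].
    - destruct (IVT _ _ _ (Pq_cont mu_m mu_p K eps) Hlt Hleft h) as [z Hz].
      exists z; exact Hz.
    - exists (mu_p - eps); split; [lra|auto]. }
  have Hr3 : mu_m < r.
  { destruct (Rle_lt_or_eq_dec _ _ (proj1 Hr1)) as [h|h] => //. rewrite -h in Hr2. lra. }
  have Sg := Pq_sign mu_m mu_p K eps r HK Hleft Hr2 Hr3.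
  have Hr4 : mu_m + eps < r.
  { destruct (Rlt_or_le (mu_m + eps) r) as [h|h] => //.
    destruct (Rle_lt_or_eq_dec _ _ h) as [h'|h'].
    - have := proj2 (Sg (mu_m + eps) ltac:(lra)) h'. lra.
    - rewrite -h' in Hmid. lra. }
  exists r. split; [lra|]. split => //. split => //.
  move=> th [Hth Hmin].
  have Kn0 : K <> 0 by lra.
  have Hd : forall c, derivable_pt_lim (R_rob mu_m mu_p K eps) c (Drob mu_m mu_p K eps c).
  { move=> c. apply is_derive_Reals. by apply rob_deriv. }
  have := Hmin r ltac:(lra).
  destruct (Rtotal_order th r) as [h|[h|h]] => // Hle.
  - destruct (MVT_cor2 _ _ th r h (fun c _ => Hd c)) as [c [Hc Hc']].
    have := proj2 (Drob_sign mu_m mu_p K eps c HK) (proj1 (Sg c ltac:(lra)) (proj2 Hc')).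
    nra.
  - destruct (MVT_cor2 _ _ r th h (fun c _ => Hd c)) as [c [Hc Hc']].
    have := proj1 (Drob_sign mu_m mu_p K eps c HK) (proj2 (Sg c ltac:(lra)) (proj1 Hc')).
    nra.
Qed.

Lemma mono_alg K c d e1 e2 x1 x2 : 1 < K -> 0 < c -> e1 < e2 ->
  0 < x1 - e1 -> 0 < x2 - e2 ->
  K^2*(x1-e1)^2 - (x1+e1-d)^2 = c -> K^2*(x2-e2)^2 - (x2+e2-d)^2 = c -> x1 < x2.
Proof.
  move=> HK Hc He Ha1 Ha2 E1 E2.
  destruct (Rlt_or_le x1 x2) as [h|h] => //. exfalso.
  set a1 := x1 - e1 in Ha1 E1. set a2 := x2 - e2 in Ha2 E2.
  set b1 := x1 + e1 - d in E1. set b2 := x2 + e2 - d in E2.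
  have B1 : - (K * a1) < b1 < K * a1.
  { have : b1^2 < (K*a1)^2 by nra.
    have : 0 < K * a1 by nra. move=> h1 h2. split; nra. }
  have B2 : - (K * a2) < b2 < K * a2.
  { have : b2^2 < (K*a2)^2 by nra.
    have : 0 < K * a2 by nra. move=> h1 h2. split; nra. }
  set p := e2 - e1. set q := x1 - x2.
  have Ea : a1 - a2 = q + p by rewrite /a1 /a2 /q /p; ring.
  have Eb : b1 - b2 = q - p by rewrite /b1 /b2 /q /p; ring.
  have Key : K^2 * ((q+p) * (a1 + a2)) = (q - p) * (b1 + b2).
  { rewrite -Ea -Eb. nra. }
  have Hp : 0 < p by rewrite /p; lra.
  have Hq : 0 <= q by rewrite /q; lra.
  clearbody a1 a2 b1 b2 p q.
  have S : 0 < (q+p)*(a1+a2) by apply Rmult_lt_0_compat; lra.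
  have S2 : K * ((q+p)*(a1+a2)) < K^2 * ((q+p)*(a1+a2)).
  { have -> : K^2 * ((q+p)*(a1+a2)) = K * (K * ((q+p)*(a1+a2))) by ring.
    apply Rmult_lt_compat_r with (r := K * ((q + p) * (a1 + a2))) in HK; [|nra]. lra. }
  destruct (Rle_or_lt p q) as [hq|hq].
  - have : (q - p) * (b1 + b2) <= (q - p) * (K * (a1 + a2)).
    { apply Rmult_le_compat_l; lra. }
    have : (q - p) * (K * (a1 + a2)) <= (q + p) * (K * (a1 + a2)).
    { apply Rmult_le_compat_r; nra. }
    nra.
  - have : (q - p) * (b1 + b2) < (p - q) * (K * (a1 + a2)).
    { have -> : (q - p) * (b1 + b2) = (p - q) * (- (b1 + b2)) by ring.
      apply Rmult_lt_compat_l; lra. }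
    have : (p - q) * (K * (a1 + a2)) <= (q + p) * (K * (a1 + a2)).
    { apply Rmult_le_compat_r; nra. }
    nra.
Qed.

Lemma mono_roots mu_m mu_p K e1 e2 r1 r2 : 1 < K -> e1 < e2 ->
  mu_m + e1 < r1 -> mu_m + e2 < r2 ->
  Pq mu_m mu_p K e1 r1 = 0 -> Pq mu_m mu_p K e2 r2 = 0 -> r1 < r2.
Proof.
  move=> HK He H1 H2 P1 P2.
  have lnp := lnK_pos K HK.
  have := mono_alg K (2 * K^2 * ln K) (mu_p - mu_m) e1 e2 (r1 - mu_m) (r2 - mu_m) HK.
  move=> h.
  have : r1 - mu_m < r2 - mu_m; [|lra].
  rewrite /Pq in P1 P2.
  apply h; try lra.
  apply Rmult_lt_0_compat; nra.
Qed.

Lemma nat_rob0 mu_m mu_p K th : R_nat mu_m mu_p K th = R_rob mu_m mu_p K 0 th.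
Proof. rewrite /R_nat /R_rob /e_plus /e_minus Rplus_0_r Rminus_0_r. reflexivity. Qed.

Theorem theorem6p1 (mu_m mu_p K : R) :
  mu_m < mu_p -> 1 < K ->
  (forall eps theta_f theta_s theta_r : R,
     0 <= eps <= (mu_p - mu_m) / 2 ->
     le_BK (mu_p - mu_m) eps K ->
     (mu_m <= theta_f <= mu_p /\ e_plus mu_p K theta_f = e_minus mu_m theta_f) ->
     is_min_on (R_nat mu_m mu_p K) mu_m mu_p theta_s ->
     is_min_on (R_rob mu_m mu_p K eps) mu_m mu_p theta_r ->
     mu_m + eps <= theta_f /\ theta_f <= theta_s /\
     theta_s <= theta_r /\ theta_r <= mu_p - eps) /\
  (forall eps1 eps2 theta1 theta2 : R,
     0 <= eps1 <= (mu_p - mu_m) / 2 -> le_BK (mu_p - mu_m) eps1 K ->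
     0 <= eps2 <= (mu_p - mu_m) / 2 -> le_BK (mu_p - mu_m) eps2 K ->
     eps1 < eps2 ->
     is_min_on (R_rob mu_m mu_p K eps1) mu_m mu_p theta1 ->
     is_min_on (R_rob mu_m mu_p K eps2) mu_m mu_p theta2 ->
     theta1 < theta2).
Proof.
  move=> Hm HK. split.
  - move=> eps tf ts tr He HB [Htf Heq] Hs Hr.
    have lnp := lnK_pos K HK.
    have HB0 : le_BK (mu_p - mu_m) 0 K.
    { split; [|lra]. apply Rle_trans with (1 := proj1 HB).
      have : (mu_p - mu_m - 2 * eps) ^ 2 / 2 <= (mu_p - mu_m - 2 * 0) ^ 2 / 2.
      { have : (mu_p - mu_m - 2 * eps) ^ 2 <= (mu_p - mu_m - 2 * 0) ^ 2.
        { apply pow_incr. lra. } lra. }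
      move=> h. destruct (Rle_lt_or_eq_dec _ _ h) as [h'|h'].
      - left. by apply exp_increasing.
      - rewrite h'. lra. }
    have He0 : 0 <= 0 <= (mu_p - mu_m) / 2 by lra.
    have Hs0 : is_min_on (R_rob mu_m mu_p K 0) mu_m mu_p ts.
    { move: Hs => [h1 h2]. split => // y hy. rewrite -!nat_rob0. by apply h2. }
    destruct (rob_char mu_m mu_p K 0 Hm HK He0 HB0) as [r0 [Hr0 [Pr0 [Pm0 U0]]]].
    destruct (rob_char mu_m mu_p K eps Hm HK He HB) as [r [Hr1 [Pr [Pm U]]]].
    have -> := U0 ts Hs0. have -> := U tr Hr.
    have Hf : (tf - mu_p) / K = - (tf - mu_m).
    { apply Phi_inj. rewrite Phi_sym. exact Heq. }
    have Hf' : tf - mu_p = - K * (tf - mu_m).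
    { have E : tf - mu_p = K * ((tf - mu_p) / K) by field; lra.
      rewrite E Hf. ring. }
    split; [|split; [|split]].
    +
      have : eps * (K + 1) <= mu_p - mu_m.
      { destruct (Rle_lt_or_eq_dec 0 eps (proj1 He)) as [h|h].
        - have h2 := proj2 HB h.
          have : eps * (K + 1) <= eps * ((mu_p - mu_m) / eps) by apply Rmult_le_compat_l; lra.
          have -> : eps * ((mu_p - mu_m) / eps) = mu_p - mu_m by field; lra.
          done.
        - rewrite -h. lra. }
      move=> h. nra.
    +
      have Sg := Pq_sign mu_m mu_p K 0 r0 HK Pm0 Pr0 ltac:(lra) tf (proj1 Htf).
      have Pf : Pq mu_m mu_p K 0 tf < 0.
      { rewrite /Pq Rplus_0_r Rminus_0_r Hf'.
        have : 0 < K^2 * ln K by apply Rmult_lt_0_compat; nra. move=> h. nra. }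
      destruct (Rle_or_lt tf r0) as [h|h] => //.
      have := proj2 Sg h. lra.
    + destruct (Rle_lt_or_eq_dec 0 eps (proj1 He)) as [h|h].
      * left. apply (mono_roots mu_m mu_p K 0 eps r0 r) => //; lra.
      * subst eps. right. rewrite -(U0 tr Hr). exact (U tr Hr).
    + lra.
  - move=> e1 e2 t1 t2 He1 HB1 He2 HB2 Hlt H1 H2.
    destruct (rob_char mu_m mu_p K e1 Hm HK He1 HB1) as [r1 [Hr1 [Pr1 [_ U1]]]].
    destruct (rob_char mu_m mu_p K e2 Hm HK He2 HB2) as [r2 [Hr2 [Pr2 [_ U2]]]].
    rewrite (U1 t1 H1) (U2 t2 H2).
    apply (mono_roots mu_m mu_p K e1 e2 r1 r2) => //; lra.
Qed.
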